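(* Let $n\ge 2$, $k\ge 2$ and let $G=W(n,k)$ be the windmill graph. Then for every integer $r\ge 2$, $\varphi(G^r)=\frac{1}{2}k(n-1)\bigl(k(n-1)-1\bigr)$.
   Context: All graphs are finite, simple and without isolated vertices. $\mathbb{N}_0$ denotes the set of non-negative integers; for finite $A,B\subseteq\mathbb{N}_0$, $A+B=\{a+b: a\in A, b\in B\}$. An integer additive set-indexer (IASI) of a graph $G$ is an injective map $f$ from $V(G)$ to the finite non-empty subsets of $\mathbb{N}_0$ such that the induced edge map $f^+(uv)=f(u)+f(v)$ is injective on $E(G)$. A weak IASI (WIASI) is an IASI $f$ with $|f^+(uv)|=\max(|f(u)|,|f(v)|)$ for every edge $uv$ (equivalently, for every edge at least one end vertex has a singleton label). A vertex or edge is mono-indexed if its set-label has cardinality $1$. Every graph admits a WIASI. The sparing number $\varphi(G)$ is the minimum, over all WIASIs of $G$, of the number of mono-indexed edges of $G$. The $r$-th power $G^r$ has vertex set $V(G)$, two distinct vertices being adjacent iff their distance in $G$ is at most $r$. The windmill graph $W(n,k)$ is obtained from $k$ copies of the complete graph $K_n$ by identifying one vertex from each copy into a single shared vertex. *)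

(* Defs.v *)
From mathcomp Require Import all_boot.
Set Implicit Arguments. Unset Strict Implicit. Unset Printing Implicit Defensive.

(* A finite subset of N_0 is represented canonically as a strictly
   increasing sequence of naturals. *)
Definition is_natset (s : seq nat) : bool := sorted ltn s.

Definition sumset (A B : seq nat) : seq nat :=
  sort leq (undup [seq a + b | a <- A, b <- B]).

Definition simple_graph (T : finType) (e : rel T) : Prop :=
  symmetric e /\ irreflexive e.

Definition edges (T : finType) (e : rel T) : {set {set T}} :=
  [set E : {set T} | [exists u, exists v, e u v && (E == [set u; v])]].

Definition IASI (T : finType) (e : rel T) (f : T -> seq nat) : Prop :=
  (forall v, is_natset (f v) /\ f v != [::]) /\
  injective f /\
  (forall u v u' v', e u v -> e u' v' ->
     sumset (f u) (f v) = sumset (f u') (f v') ->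
     [set u; v] = [set u'; v']).

Definition WIASI (T : finType) (e : rel T) (f : T -> seq nat) : Prop :=
  IASI e f /\
  (forall u v, e u v -> size (sumset (f u) (f v)) = maxn (size (f u)) (size (f v))).

Definition mono_edges (T : finType) (e : rel T) (f : T -> seq nat) : nat :=
  #|[set E in edges e | [exists u, exists v,
        [&& e u v, E == [set u; v] & size (sumset (f u) (f v)) == 1]]]|.

Definition is_sparing_number (T : finType) (e : rel T) (c : nat) : Prop :=
  (exists f, WIASI e f /\ mono_edges e f = c) /\
  (forall f, WIASI e f -> c <= mono_edges e f).

(* r-th power: distinct vertices at distance at most r, i.e. joined by a
   walk with at most r edges. *)
Definition gpow (T : finType) (e : rel T) (r : nat) : rel T :=
  fun x y => (x != y) &&
    [exists m : 'I_r.+1, exists t : m.-tuple T, path e x t && (last x t == y)].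

(* Windmill graph W(n,k): k copies of K_n sharing one vertex.  The shared
   vertex is None; Some (i, a) is the a-th non-shared vertex of copy i. *)
Definition windmill_vertex (n k : nat) : finType := option ('I_k * 'I_n.-1).

Definition windmill (n k : nat) : rel (windmill_vertex n k) :=
  fun x y => match x, y with
  | None, None => false
  | None, Some _ => true
  | Some _, None => true
  | Some (i, a), Some (j, b) => (i == j) && (a != b)
  end.
Arguments windmill n k : clear implicits.

(* Main.v *)
Require Import Defs.
From mathcomp Require Import all_boot.
From mathcomp Require Import zify.
Set Implicit Arguments. Unset Strict Implicit. Unset Printing Implicit Defensive.

Lemma mem_sumset A B a b : a \in A -> b \in B -> a + b \in sumset A B.
Proof. by move=> ha hb; rewrite /sumset mem_sort mem_undup; apply: allpairs_f. Qed.

Lemma uniq_sumset A B : uniq (sumset A B).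
Proof. by rewrite /sumset sort_uniq undup_uniq. Qed.

Lemma seq_max (s : seq nat) : s != [::] -> exists2 m, m \in s & forall b, b \in s -> b <= m.
Proof.
elim: s => [//|x s IH] _.
case: (altP (s =P [::])) => [->|hs].
  by exists x; rewrite ?mem_seq1 // => b; rewrite mem_seq1 => /eqP ->.
have [m hm hmax] := IH hs.
exists (maxn x m).
  by case: (leqP x m) => h; rewrite ?(maxn_idPr (ltnW h)) ?(maxn_idPl h) ?(maxn_idPr h) inE ?hm ?eqxx ?orbT.
move=> b; rewrite inE => /orP [/eqP ->|/hmax]; lia.
Qed.

Lemma keyL (A B S : seq nat) a0 a1 : uniq B -> a0 \in A -> a1 \in A -> a0 < a1 ->
  B != [::] -> uniq S -> (forall a b, a \in A -> b \in B -> a + b \in S) ->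
  size B < size S.
Proof.
move=> uB h0 h1 lt01 nB uS hS.
have [m hm hmax] := seq_max nB.
have := @uniq_leq_size _ (rcons [seq a0 + b | b <- B] (a1 + m)) S.
rewrite size_rcons size_map; apply.
  rewrite rcons_uniq (map_inj_uniq (@addnI a0)) uB andbT.
  apply/mapP => -[b hb E]; have := hmax _ hb; lia.
move=> x; rewrite mem_rcons inE => /orP [/eqP ->|/mapP [b hb ->]]; exact: hS.
Qed.

Lemma big2 (A : seq nat) : is_natset A -> 1 < size A ->
  exists a0 a1, [/\ a0 \in A, a1 \in A & a0 < a1].
Proof.
case: A => [|a0 [|a1 s]] //= hs _; exists a0, a1.
rewrite !inE eqxx ?orbT; move: hs => /andP [] -> _; split=> //; by rewrite eqxx orbT.
Qed.

Lemma natset_uniq A : is_natset A -> uniq A.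
Proof. apply: sorted_uniq; [exact: ltn_trans | exact: ltnn]. Qed.

Lemma two_big (T : finType) (e : rel T) f u v : WIASI e f -> e u v ->
  1 < size (f u) -> 1 < size (f v) -> False.
Proof.
move=> [[hf _] hw] he hu hv.
have hs := hw _ _ he.
have [hnu nu] := hf u; have [hnv nv] := hf v.
case: (leqP (size (f u)) (size (f v))) => hle.
  have [a0 [a1 [h0 h1 h01]]] := big2 hnu hu.
  have := @keyL (f u) (f v) (sumset (f u) (f v)) a0 a1 (natset_uniq hnv) h0 h1 h01 nv
    (uniq_sumset _ _) (fun a b ha hb => mem_sumset ha hb).
  by rewrite hs (maxn_idPr hle) ltnn.
have [a0 [a1 [h0 h1 h01]]] := big2 hnv hv.
have := @keyL (f v) (f u) (sumset (f u) (f v)) a0 a1 (natset_uniq hnu) h0 h1 h01 nu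
    (uniq_sumset _ _) (fun a b ha hb => ltac:(rewrite addnC; exact: mem_sumset)).
by rewrite hs (maxn_idPl (ltnW hle)) ltnn.
Qed.

Lemma count_avoid (T : finType) (w0 : T) N : #|T| = N.+1 ->
  #|[set E : {set T} | E \subset [set~ w0] & #|E| == 2]| = 'C(N, 2).
Proof. by move=> hT; rewrite cards_draws cardsC1 hT. Qed.

Lemma lower (T : finType) (e : rel T) N : (forall u v, e u v = (u != v)) -> #|T| = N.+1 ->
  forall f, WIASI e f -> 'C(N, 2) <= mono_edges e f.
Proof.
move=> he hT f hW.
have : 0 < #|T| by rewrite hT.
case/card_gt0P => x0 _.
pose w0 := if [pick w | 1 < size (f w)] is Some w then w else x0.
have small : forall u, u != w0 -> size (f u) = 1.
  move=> u hu; have [[hf _] _] := hW; have [_ nu] := hf u.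
  case: (ltnP 1 (size (f u))) => h; last by move: nu h; case: (f u) => [|? [|]].
  exfalso; move: hu; rewrite /w0; case: pickP => [w hw|/(_ u)]; last by rewrite h.
  move=> huw; apply: (two_big hW _ h hw); by rewrite he.
rewrite -(count_avoid w0 hT) /mono_edges; apply: subset_leq_card.
apply/subsetP => E; rewrite !inE => /andP [hsub /cards2P [u [v [huv hE]]]].
subst E; move: hsub; rewrite subUset !sub1set !inE => /andP [hu hv].
have euv : e u v by rewrite he.
apply/andP; split; apply/existsP; exists u; apply/existsP; exists v.
  by rewrite euv eqxx.
by rewrite euv eqxx (hW.2 _ _ euv) (small _ hu) (small _ hv).
Qed.

Lemma sidon_core a b c d : a < b -> c < d -> 2 ^ a + 2 ^ b = 2 ^ c + 2 ^ d -> a = c /\ b = d.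
Proof.
move=> hab hcd E.
have bnd x y : x < y -> 2 ^ y <= 2 ^ x + 2 ^ y < 2 ^ y.+1.
  move=> hxy; rewrite leq_addl /= expnS mul2n -addnn ltn_add2r ltn_exp2l //.
have hb := trunc_log_eq (isT : 1 < 2) (bnd _ _ hab).
have hd := trunc_log_eq (isT : 1 < 2) (bnd _ _ hcd).
have bd : b = d by rewrite -hb -hd E.
split=> //; subst d; apply: (@expnI 2) => //; exact: (addIn E).
Qed.

Lemma sidon a b c d : a != b -> c != d -> 2 ^ a + 2 ^ b = 2 ^ c + 2 ^ d ->
  (a = c /\ b = d) \/ (a = d /\ b = c).
Proof.
move=> hab hcd E.
case: (ltngtP a b) hab => // h1 _; case: (ltngtP c d) hcd => // h2 _.
- by left; apply: sidon_core.
- by right; have [] := sidon_core h1 h2 (etrans E (addnC _ _)).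
- by right; have [] := sidon_core h1 h2 (etrans (addnC _ _) E).
- by left; have [] := sidon_core h1 h2 (etrans (addnC _ _) (etrans E (addnC _ _))).
Qed.

Definition lab (T : finType) (w0 : T) (x : T) : seq nat :=
  if x == w0 then [:: 0; 1] else [:: 2 ^ enum_rank x].

Lemma S1 (T : finType) (w0 u v : T) : u != w0 -> v != w0 ->
  sumset (lab w0 u) (lab w0 v) = [:: 2 ^ enum_rank u + 2 ^ enum_rank v].
Proof. by move=> hu hv; rewrite /lab (negbTE hu) (negbTE hv). Qed.

Lemma S2 (T : finType) (w0 v : T) : v != w0 ->
  sumset (lab w0 w0) (lab w0 v) = [:: 2 ^ enum_rank v; (2 ^ enum_rank v).+1].
Proof.
move=> hv; rewrite /lab eqxx (negbTE hv) /sumset /= add0n add1n.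
rewrite inE eqn_leq ltnn /= andbF.
by apply: (sorted_sort leq_trans); rewrite /= leqnSn.
Qed.

Lemma S3 (T : finType) (w0 v : T) : v != w0 ->
  sumset (lab w0 v) (lab w0 w0) = [:: 2 ^ enum_rank v; (2 ^ enum_rank v).+1].
Proof.
move=> hv; rewrite /lab eqxx (negbTE hv) /sumset /= addn0 addn1.
rewrite inE eqn_leq ltnn /= andbF.
by apply: (sorted_sort leq_trans); rewrite /= leqnSn.
Qed.

Lemma rank_inj (T : finType) (u v : T) : 2 ^ enum_rank u = 2 ^ enum_rank v -> u = v.
Proof. by move/(@expnI 2 isT)/val_inj/enum_rank_inj. Qed.

Lemma rank_inj' (T : finType) (u v : T) : (enum_rank u : nat) = enum_rank v -> u = v.
Proof. by move/val_inj/enum_rank_inj. Qed.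

Lemma rank_neq (T : finType) (u v : T) : u != v -> (enum_rank u : nat) != enum_rank v.
Proof. by rewrite (inj_eq val_inj) (inj_eq enum_rank_inj). Qed.


Lemma upper (T : finType) (e : rel T) N (w0 : T) : (forall u v, e u v = (u != v)) -> #|T| = N.+1 ->
  WIASI e (lab w0) /\ mono_edges e (lab w0) = 'C(N, 2).
Proof.
move=> he hT.
have sz u v : u != v -> size (sumset (lab w0 u) (lab w0 v)) = if (u == w0) || (v == w0) then 2 else 1.
  move=> huv; case: (eqVneq u w0) => [eu|hu]; case: (eqVneq v w0) => [ev|hv].
  - by rewrite eu ev eqxx in huv.
  - by rewrite eu S2.
  - by rewrite ev S3.
  - by rewrite S1.
split; last first.
  rewrite -(count_avoid w0 hT) /mono_edges; apply: eq_card => E; rewrite !inE.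
  apply/idP/idP.
    case/andP => _ /existsP [u /existsP [v /and3P [euv /eqP hE hs]]]; subst E.
    rewrite he in euv; rewrite sz // in hs.
    case: (eqVneq u w0) hs => hu //; case: (eqVneq v w0) => hv //= _.
    by rewrite subUset !sub1set !inE hu hv cards2 euv.
  case/andP => hsub /cards2P [u [v [huv hE]]]; subst E.
  move: hsub; rewrite subUset !sub1set !inE => /andP [hu hv].
  have euv : e u v by rewrite he.
  apply/andP; split; apply/existsP; exists u; apply/existsP; exists v.
    by rewrite euv eqxx.
  by rewrite euv eqxx sz // (negbTE hu) (negbTE hv).
split; last first.
  move=> u v; rewrite he => huv; rewrite sz // /lab.
  by case: (u == w0); case: (v == w0).
split.
  by move=> v; rewrite /lab; case: ifP.
split.
  move=> x y; rewrite /lab; case: (eqVneq x w0) => [->|hx]; case: (eqVneq y w0) => [->|hy] //;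
    try by move/(congr1 size).
  by case=> /rank_inj.
move=> u v u' v'; rewrite !he => huv huv'.
case: (eqVneq u w0) => [eu|hu]; case: (eqVneq v w0) => [ev|hv];
  case: (eqVneq u' w0) => [eu'|hu']; case: (eqVneq v' w0) => [ev'|hv'];
  try (subst; rewrite ?eqxx in huv huv'; done);
  subst; try rewrite (S2 hv); try rewrite (S3 hu); try rewrite (S1 hu hv);
  try rewrite (S2 hv'); try rewrite (S3 hu'); try rewrite (S1 hu' hv');
  try by move/(congr1 size).
- by case=> /rank_inj ->.
- by case=> /rank_inj ->; rewrite setUC.
- by case=> /rank_inj ->; rewrite setUC.
- by case=> /rank_inj ->.
- case=> E; have [[h1 h2]|[h1 h2]] := sidon (rank_neq huv) (rank_neq huv') E.
  + by rewrite (rank_inj' h1) (rank_inj' h2).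
  + by rewrite (rank_inj' h1) (rank_inj' h2) setUC.
Qed.

Lemma complete_sparing (T : finType) (e : rel T) N : (forall u v, e u v = (u != v)) ->
  #|T| = N.+1 -> is_sparing_number e 'C(N, 2).
Proof.
move=> he hT; have : 0 < #|T| by rewrite hT.
case/card_gt0P => w0 _.
have [hW hm] := upper w0 he hT.
split; first by exists (lab w0).
exact: lower he hT.
Qed.

Lemma gpow_windmill n k r : 2 <= r -> forall u v,
  gpow (windmill n k) r u v = (u != v).
Proof.
move=> hr u v; rewrite /gpow; case: (eqVneq u v) => //= huv.
have h1 : 1 < r.+1 by lia.
have h2 : 2 < r.+1 by lia.
apply/existsP; case: u v huv => [p|] [q|] huv //.
- exists (Ordinal h2); apply/existsP; exists [tuple None; Some q].
  rewrite /= eqxx; by case: p {huv}.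
- exists (Ordinal h1); apply/existsP; exists [tuple None].
  rewrite /= eqxx; by case: p {huv}.
- exists (Ordinal h1); apply/existsP; exists [tuple Some q].
  by rewrite /= ?eqxx.
Qed.

Theorem mainTheorem8 (n k r : nat) (hn : 2 <= n) (hk : 2 <= k) (hr : 2 <= r) :
  is_sparing_number (gpow (windmill n k) r)
    ((k * (n - 1) * (k * (n - 1) - 1)) %/ 2).
Proof.
have -> : (k * (n - 1) * (k * (n - 1) - 1)) %/ 2 = 'C(k * (n - 1), 2).
  by rewrite bin2 divn2 !subn1.
apply: (@complete_sparing _ _ (k * (n - 1))); first exact: gpow_windmill.
by rewrite /windmill_vertex card_option card_prod !card_ord subn1.
Qed.
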